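(* Let $A$ be a symmetric general metric space, i.e. $A(x,y)=A(y,x)$ for all $x,y$. Then: (1) every flat filter on $A$ is Cauchy; (2) for every Cauchy filter $\mathcal F$, the maps $x\mapsto\lim^+_{y\in\mathcal F}A(x,y)$ and $x\mapsto\lim^+_{y\in\mathcal F}A(y,x)$ coincide; (3) every left adjoint left module on $A$ has the same underlying map as its right adjoint; (4) every $\mathcal P_2$-flat left module on $A$ is a left adjoint module; (5) a Cauchy filter on $A$ is closed if and only if it is a minimal Cauchy filter (minimal for inclusion among Cauchy filters); (6) the preorder of closed flat filters on $A$ ordered by reverse inclusion is discrete (no two distinct comparable elements).
   Context: A general metric space $A$ is a set with $A(-,-):A\times A\to[0,\infty]$, $A(x,x)=0$, $A(x,z)\le A(x,y)+A(y,z)$. Internal hom on $[0,\infty]$: $[x,y]=\max(y-x,0)$ for finite $x,y$, $[x,\infty]=\infty$ for $x<\infty$, $[\infty,y]=0$. A left module is $M:A\to[0,\infty]$ with $M(x)\le M(y)+A(x,y)$; a right module is $N$ with $N(y)\le A(x,y)+N(x)$. A left module $M$ is a left adjoint with right adjoint the right module $N$ iff $\inf_x(M(x)+N(x))=0$ and $M(x)+N(y)\ge A(x,y)$ for all $x,y$. $M$ is $\mathcal P_2$-flat iff (F2) for every finite (possibly empty) family $(N_i)$ of right modules, $\inf_x(M(x)+\max_iN_i(x))=\max_i\inf_x(M(x)+N_i(x))$ (empty max $=0$), and (F3) for all $v\in[0,\infty]$ and right modules $N$, $\inf_x(M(x)+[v,N(x)])=[v,\inf_x(M(x)+N(x))]$.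 A filter on $A$ is a nonempty set of nonempty subsets closed under finite intersections and supersets; $\lim^+_{\mathcal F}t=\inf_{f\in\mathcal F}\sup_{x\in f}t(x)$, $\lim^-_{\mathcal F}t=\sup_{f\in\mathcal F}\inf_{x\in f}t(x)$, $M^-(\mathcal F)(x)=\lim^-_{y\in\mathcal F}A(x,y)$. Cauchy: $\inf_{f}\sup_{x,y\in f}A(x,y)=0$. Weakly flat: $\lim^+_{\mathcal F}M^-(\mathcal F)=0$. Flat: for every $\epsilon>0$ there is $f\in\mathcal F$ such that for every finite family $x_1,\dots,x_n\in f$ and every $g\in\mathcal F$ there is $y\in g$ with $A(x_i,y)\le\epsilon$ for all $i$. A weakly flat filter $\mathcal F$ is closed iff for every $f\in\mathcal F$ there is $\epsilon>0$ with $\{x:M^-(\mathcal F)(x)\le\epsilon\}\subseteq f$. *)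

(* Defs.v *)
(* values in [0,oo] are modelled as nonnegative
   extended reals \bar R over an arbitrary R : realType. *)
From Stdlib Require Lists.List.
From HB Require Import structures.
From mathcomp Require Import all_boot all_order all_algebra.
From mathcomp Require Import all_classical all_reals ereal.
Set Implicit Arguments. Unset Strict Implicit. Unset Printing Implicit Defensive.
Import Order.TTheory GRing.Theory Num.Theory.
Local Open Scope classical_set_scope.
Local Open Scope ring_scope.
Local Open Scope ereal_scope.

Section GM.
Context {R : realType} {T : Type}.

Definition gm_gmetric (A : T -> T -> \bar R) : Prop :=
  [/\ (forall x y, 0 <= A x y),
      (forall x, A x x = 0) &
      (forall x y z, A x z <= A x y + A y z)].

Definition gm_ihom (x y : \bar R) : \bar R :=
  match x, y with
  | +oo, _ => 0
  | _, +oo => +oo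
  | _, _ => maxe (y - x) 0
  end.

Definition gm_einf (f : T -> \bar R) : \bar R := ereal_inf (range f).

Definition gm_left_module (A : T -> T -> \bar R) (M : T -> \bar R) : Prop :=
  (forall x, 0 <= M x) /\ (forall x y, M x <= M y + A x y).

Definition gm_right_module (A : T -> T -> \bar R) (N : T -> \bar R) : Prop :=
  (forall x, 0 <= N x) /\ (forall x y, N y <= A x y + N x).

Definition gm_adjoint_pair (A : T -> T -> \bar R) (M N : T -> \bar R) : Prop :=
  gm_einf (fun x => M x + N x) = 0 /\ (forall x y, A x y <= M x + N y).

Definition gm_left_adjoint (A : T -> T -> \bar R) (M : T -> \bar R) : Prop :=
  exists N, gm_right_module A N /\ gm_adjoint_pair A M N.

Definition gm_fmax (s : seq (\bar R)) : \bar R := foldr maxe 0 s.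

Definition gm_P2_flat (A : T -> T -> \bar R) (M : T -> \bar R) : Prop :=
  (forall Ns : seq (T -> \bar R), (forall N, Stdlib.Lists.List.In N Ns -> gm_right_module A N) ->
     gm_einf (fun x => M x + gm_fmax [seq N x | N <- Ns])
     = gm_fmax [seq gm_einf (fun x => M x + N x) | N <- Ns]) /\
  (forall (v : \bar R) (N : T -> \bar R), 0 <= v -> gm_right_module A N ->
     gm_einf (fun x => M x + gm_ihom v (N x)) = gm_ihom v (gm_einf (fun x => M x + N x))).

Definition gm_is_filter (F : set (set T)) : Prop :=
  [/\ F !=set0,
      (forall f, F f -> f !=set0),
      (forall f g, F f -> F g -> F (f `&` g)) &
      (forall f g, F f -> f `<=` g -> F g)].

Definition gm_limsupF (F : set (set T)) (t : T -> \bar R) : \bar R :=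
  ereal_inf [set ereal_sup (t @` f) | f in F].

Definition gm_liminfF (F : set (set T)) (t : T -> \bar R) : \bar R :=
  ereal_sup [set ereal_inf (t @` f) | f in F].

Definition gm_Mminus (A : T -> T -> \bar R) (F : set (set T)) (x : T) : \bar R :=
  gm_liminfF F (fun y => A x y).

Definition gm_cauchy (A : T -> T -> \bar R) (F : set (set T)) : Prop :=
  ereal_inf [set ereal_sup [set A p.1 p.2 | p in f `*` f] | f in F] = 0.

Definition gm_weakly_flat (A : T -> T -> \bar R) (F : set (set T)) : Prop :=
  gm_limsupF F (gm_Mminus A F) = 0.

Definition gm_flat (A : T -> T -> \bar R) (F : set (set T)) : Prop :=
  forall eps : R, (0 < eps)%R -> exists2 f, F f &
    forall xs : seq T, (forall x, Stdlib.Lists.List.In x xs -> f x) ->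
    forall g, F g -> exists2 y, g y & forall x, Stdlib.Lists.List.In x xs -> A x y <= eps%:E.

Definition gm_closed_filter (A : T -> T -> \bar R) (F : set (set T)) : Prop :=
  gm_weakly_flat A F /\
  forall f, F f -> exists2 eps : R, (0 < eps)%R &
    [set x | gm_Mminus A F x <= eps%:E] `<=` f.

Definition gm_minimal_cauchy (A : T -> T -> \bar R) (F : set (set T)) : Prop :=
  gm_is_filter F /\ gm_cauchy A F /\
  forall G, gm_is_filter G -> gm_cauchy A G -> G `<=` F -> G = F.

End GM.

(* Main.v *)
Require Import Defs.
From HB Require Import structures.
From mathcomp Require Import all_boot all_order all_algebra.
From mathcomp Require Import all_classical all_reals ereal.
From mathcomp Require Import lra.
Set Implicit Arguments. Unset Strict Implicit. Unset Printing Implicit Defensive.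
Import Order.TTheory GRing.Theory Num.Theory.
Local Open Scope classical_set_scope.
Local Open Scope ring_scope.
Local Open Scope ereal_scope.

Section S.
Variable R : realType.


Lemma eq0_small x : 0 <= x -> (forall e : R, (0 < e)%R -> x <= e%:E) -> x = 0.
Proof.
move=> x0 h; apply: le_anti; rewrite x0 andbT.
by apply/lee_addgt0Pr => e e0; rewrite add0e h.
Qed.

Lemma ihom_fin (r s : R) : gm_ihom r%:E s%:E = (Num.max (s - r) 0)%:E.
Proof. by rewrite /= EFin_max. Qed.

Lemma ihom_Ny (r : R) : gm_ihom r%:E -oo = 0.
Proof. by rewrite /= max_r // leNye. Qed.

Lemma ihom_ge0 (r : R) y : 0 <= gm_ihom r%:E y.
Proof.
case: y => [s| |]; last by rewrite ihom_Ny.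
  by rewrite ihom_fin lee_fin le_max lexx orbT.
exact: leey.
Qed.

Lemma ihom_lip (r : R) y z c : 0 <= c -> y <= c + z ->
  gm_ihom r%:E y <= c + gm_ihom r%:E z.
Proof.
case: c => [c'| |] c0.
- case: z => [t| |].
  + case: y => [s| |] h.
    * rewrite !ihom_fin -EFinD lee_fin.
      rewrite -EFinD lee_fin in h; rewrite lee_fin in c0.
      have ? : (t - r <= Num.max (t-r) 0)%R by rewrite le_max lexx.
      have ? : (0 <= Num.max (t-r) 0)%R by rewrite le_max lexx orbT.
      rewrite ge_max; apply/andP; split; lra.
    * by move: h; rewrite leye_eq.
    * by rewrite ihom_Ny adde_ge0 // ihom_ge0.
  + by move=> _; rewrite /= addey // leey.
  + rewrite addeNy leeNy_eq => /eqP ->.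
    by rewrite ihom_Ny adde0.
- by move=> _; rewrite addye ?leey // gt_eqF // (lt_le_trans _ (ihom_ge0 r z)).
- by [].
Qed.

Lemma ihom_lt (r e : R) y : gm_ihom r%:E y < e%:E -> y <= (r + e)%:E.
Proof.
case: y => [s| |] //; last by rewrite leNye.
rewrite ihom_fin lte_fin lee_fin gt_max => /andP[h _]; lra.
Qed.

Lemma ihom_self (r : R) : gm_ihom r%:E r%:E = 0.
Proof. by rewrite ihom_fin subrr maxxx. Qed.

Variable T : Type.
Variable A : T -> T -> \bar R.
Variable hA : gm_gmetric A.
Variable hsym : forall x y, A x y = A y x.

Lemma A0 x y : 0 <= A x y. Proof. by case: hA. Qed.
Lemma Arefl x : A x x = 0. Proof. by case: hA. Qed.
Lemma Atri x y z : A x z <= A x y + A y z. Proof. by case: hA. Qed.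

Lemma cauchy_small F : gm_cauchy A F -> forall e : R, (0 < e)%R ->
  exists2 f, F f & forall x y, f x -> f y -> A x y <= e%:E.
Proof.
rewrite /gm_cauchy => h e e0.
have : ereal_inf [set ereal_sup [set A p.1 p.2 | p in f `*` f] | f in F] < e%:E.
  by rewrite h lte_fin.
move=> /ereal_inf_lt [_ [f Ff <-]] lt; exists f => // x y fx fy.
apply: le_trans (ltW lt); apply: ereal_sup_ubound; by exists (x, y).
Qed.

Lemma small_cauchy F : gm_is_filter F ->
  (forall e : R, (0 < e)%R -> exists2 f, F f & forall x y, f x -> f y -> A x y <= e%:E) ->
  gm_cauchy A F.
Proof.
move=> [_ Fne _ _] h; apply: eq0_small.
  apply: le_ereal_inf_tmp => _ [f Ff <-].
  have [x fx] := Fne f Ff.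
  apply: le_ereal_sup_tmp; exists (A x x); first by exists (x, x).
  exact: A0.
move=> e e0; have [f Ff hf] := h e e0.
apply: ge_ereal_inf; exists (ereal_sup [set A p.1 p.2 | p in f `*` f]); first by exists f.
apply: ge_ereal_sup => _ [[x y] [/= fx fy] <-]; exact: hf.
Qed.

Lemma flat_cauchy F : gm_is_filter F -> gm_flat A F -> gm_cauchy A F.
Proof.
move=> hF fl; apply: small_cauchy => // e e0.
have e20 : (0 < e / 2)%R by rewrite divr_gt0.
have [f Ff hf] := fl _ e20; exists f => // x y fx fy.
have hin : forall w, List.In w [:: x; y] -> f w by move=> w /= [<-|[<-|[]]].
have [z _ hz] := hf [:: x; y] hin f Ff.
apply: le_trans (Atri x z y) _.
rewrite (hsym z y) (splitr e) EFinD; apply: leeD; apply: hz => /=; auto.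
Qed.

Lemma adj_eq M N : gm_left_module A M -> gm_right_module A N ->
  gm_adjoint_pair A M N -> M = N.
Proof.
move=> [M0 hM] [N0 hN] [hinf hle]; apply: funext => x.
have near : forall e : R, (0 < e)%R -> exists y, M y + N y < e%:E.
  move=> e e0; have : gm_einf (fun x => M x + N x) < e%:E by rewrite hinf lte_fin.
  by move=> /ereal_inf_lt [_ [y _ <-]] h; exists y.
apply: le_anti; apply/andP; split; apply/lee_addgt0Pr => e e0;
  have [y hy] := near _ (divr_gt0 e0 (ltr0Sn _ 1)).
- have My : M y <= (e / 2)%:E by apply: le_trans (ltW hy); rewrite leeDl.
  apply: le_trans (hM x y) _; rewrite (hsym x y).
  apply: le_trans (leeD2l _ (hle y x)) _.
  rewrite addeA addeC (splitr e) EFinD; apply: leeD2l; exact: leeD.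
- have Ny : N y <= (e / 2)%:E by apply: le_trans (ltW hy); rewrite leeDr.
  apply: le_trans (hN y x) _; rewrite (hsym y x).
  apply: le_trans (leeD2r _ (hle x y)) _.
  rewrite -addeA (splitr e) EFinD; apply: leeD2l; exact: leeD.
Qed.

Lemma ge0_neqNy (x : \bar R) : 0 <= x -> x != -oo.
Proof. by case: x. Qed.

Lemma rm_ihom (r : R) N : gm_right_module A N ->
  gm_right_module A (fun x => gm_ihom r%:E (N x)).
Proof.
move=> [N0 hN]; split => [x|x y]; first exact: ihom_ge0.
by apply: ihom_lip; [exact: A0 | exact: hN].
Qed.

Lemma rm_dist a : gm_right_module A (fun x => A a x).
Proof. by split => [x|x y]; [exact: A0 | rewrite addeC; exact: Atri]. Qed.

Lemma P2_adj M : gm_left_module A M -> gm_P2_flat A M -> gm_left_adjoint A M.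
Proof.
move=> [M0 hM] [F2 F3]; exists M.
have rmM : gm_right_module A M.
  by split=> // x y; rewrite addeC hsym; exact: hM.
have inf_dist a : gm_einf (fun x => M x + A a x) = M a.
  apply: le_anti; apply/andP; split.
    by apply: ge_ereal_inf; exists (M a + A a a); [by exists a | rewrite Arefl adde0].
  by apply: le_ereal_inf_tmp => _ [x _ <-]; exact: hM.
split => //; split.
- have h0 := F2 [::] (fun N (h : List.In N [::]) => match h with end).
  rewrite /= in h0.
  apply: eq0_small.
    by apply: le_ereal_inf_tmp => _ [x _ <-]; exact: adde_ge0.
  move=> e e0; have e20 : (0 < e / 2)%R by rewrite divr_gt0.
  have : gm_einf (fun x => M x + 0) < (e / 2)%:E by rewrite h0 lte_fin.
  move=> /ereal_inf_lt [_ [x _ <-]]; rewrite adde0 => hx.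
  apply: ge_ereal_inf; exists (M x + M x); first by exists x.
  by rewrite (splitr e) EFinD; apply: leeD; exact: ltW.
- move=> a b.
  case Ma : (M a) => [ma| |]; last by have := M0 a; rewrite Ma.
    case Mb : (M b) => [mb| |]; last by have := M0 b; rewrite Mb.
      set Na := fun x => gm_ihom ma%:E (A a x).
      set Nb := fun x => gm_ihom mb%:E (A b x).
      have ha : gm_einf (fun x => M x + Na x) = 0.
        rewrite /Na (F3 ma%:E (fun x => A a x)) ?inf_dist ?Ma ?ihom_self //.
          by rewrite -Ma.
        exact: rm_dist.
      have hb : gm_einf (fun x => M x + Nb x) = 0.
        rewrite /Nb (F3 mb%:E (fun x => A b x)) ?inf_dist ?Mb ?ihom_self //.
          by rewrite -Mb.
        exact: rm_dist.
      have hin : forall N, List.In N [:: Na; Nb] -> gm_right_module A N.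
        by move=> N /= [<-|[<-|[]]]; apply: rm_ihom; exact: rm_dist.
      have h2 := F2 _ hin.
      rewrite /= ha hb !maxxx in h2.
      apply/lee_addgt0Pr => e e0.
      have e20 : (0 < e / 2)%R by rewrite divr_gt0.
      have : gm_einf (fun x => M x + gm_fmax [seq N x | N <- [:: Na; Nb]]) < (e / 2)%:E.
        by rewrite h2 lte_fin.
      move=> /ereal_inf_lt [_ [x _ <-]] /= hx.
      have hNa : Na x < (e / 2)%:E.
        apply: le_lt_trans hx; apply: le_trans (leeDr _ _); last exact: M0.
        by rewrite le_max lexx.
      have hNb : Nb x < (e / 2)%:E.
        apply: le_lt_trans hx; apply: le_trans (leeDr _ _); last exact: M0.
        by rewrite !le_max lexx orbT.
      have la := ihom_lt hNa; have lb := ihom_lt hNb.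
      apply: le_trans (Atri a x b) _; rewrite (hsym x b).
      apply: le_trans (leeD la lb) _.
      rewrite -!EFinD lee_fin; lra.
    by rewrite addey // leey.
  by rewrite addye ?leey // ge0_neqNy.
Qed.

Lemma Mm_ge0 F x : gm_is_filter F -> 0 <= gm_Mminus A F x.
Proof.
move=> [[g Fg] _ _ _]; rewrite /gm_Mminus /gm_liminfF.
apply: le_ereal_sup_tmp; exists (ereal_inf ((fun y => A x y) @` g)); first by exists g.
by apply: le_ereal_inf_tmp => _ [y _ <-]; exact: A0.
Qed.

Lemma Mm_le F h x e : gm_is_filter F -> F h -> h x ->
  (forall y, h y -> A x y <= e) -> gm_Mminus A F x <= e.
Proof.
move=> [_ Fne FI _] Fh hx hxy; rewrite /gm_Mminus /gm_liminfF.
apply: ge_ereal_sup => _ [g Fg <-].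
have [y [gy hy]] := Fne _ (FI _ _ Fg Fh).
by apply: ge_ereal_inf; exists (A x y); [by exists y | exact: hxy].
Qed.

Lemma Mm_near F g x (e d : R) : F g -> gm_Mminus A F x <= e%:E -> (0 < d)%R ->
  exists2 y, g y & A x y < (e + d)%:E.
Proof.
move=> Fg hM d0.
have : ereal_inf ((fun y => A x y) @` g) < (e + d)%:E.
  apply: (@le_lt_trans _ _ e%:E); last by rewrite lte_fin; lra.
  apply: le_trans hM; apply: ereal_sup_ubound; by exists g.
by move=> /ereal_inf_lt [_ [y gy <-]] h; exists y.
Qed.

Definition Gset F : set (set T) := fun S =>
  exists2 e : R, (0 < e)%R & [set x | gm_Mminus A F x <= e%:E] `<=` S.

Lemma G_least F H : gm_is_filter F -> gm_is_filter H -> gm_cauchy A H ->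
  H `<=` F -> Gset F `<=` H.
Proof.
move=> hF [_ _ _ Hsup] hc HF S [e e0 hS].
have [f Hf hf] := cauchy_small hc e0.
apply: (Hsup f) => [|x fx]; first exact: Hf.
apply: hS.
exact: (Mm_le hF (HF _ Hf) fx (fun y fy => hf x y fx fy)).
Qed.

Lemma G_filter F : gm_is_filter F -> gm_cauchy A F -> gm_is_filter (Gset F).
Proof.
move=> hF hc; have GF := G_least hF hF hc (fun _ x => x).
have [_ Fne _ _] := hF.
split.
- by exists setT; exists 1%R.
- by move=> S GS; apply: Fne; exact: GF.
- move=> S1 S2 [e1 e10 h1] [e2 e20 h2]; exists (Num.min e1 e2).
    by rewrite lt_min e10 e20.
  move=> x hx; split; [apply: h1 | apply: h2]; apply: le_trans hx _;
    by rewrite lee_fin ge_min lexx ?orbT.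
- by move=> S1 S2 [e e0 h] sub; exists e => //; exact: subset_trans sub.
Qed.

Lemma G_cauchy F : gm_is_filter F -> gm_cauchy A F -> gm_cauchy A (Gset F).
Proof.
move=> hF hc; apply: small_cauchy; first exact: G_filter.
move=> e e0; set d := (e / 8)%R.
have d0 : (0 < d)%R by rewrite divr_gt0.
have [g Fg hg] := cauchy_small hc d0.
exists [set x | gm_Mminus A F x <= d%:E]; first by exists d.
move=> x x' hx hx'.
have [y gy hy] := Mm_near Fg hx d0.
have [y' gy' hy'] := Mm_near Fg hx' d0.
apply: le_trans (Atri x y x') _.
apply: le_trans (leeD2l _ (Atri y y' x')) _.
rewrite (hsym y' x').
apply: le_trans (leeD (ltW hy) (leeD (hg y y' gy gy') (ltW hy'))) _.
rewrite -!EFinD lee_fin /d; lra.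
Qed.

Lemma closed_iff F : gm_is_filter F -> gm_cauchy A F ->
  (gm_closed_filter A F <-> gm_minimal_cauchy A F).
Proof.
move=> hF hc; have [_ Fne _ _] := hF; split.
- move=> [_ hcl].
  have FG : F `<=` Gset F by move=> f Ff; have [e e0 h] := hcl f Ff; exists e.
  split=> //; split=> // H hH hcH HF; apply/seteqP; split=> // f Ff.
  by apply: (G_least hF hH hcH HF); exact: FG.
- move=> [_ [_ hmin]].
  have GF : Gset F = F.
    exact: hmin _ (G_filter hF hc) (G_cauchy hF hc) (G_least hF hF hc (fun _ x => x)).
  split.
  + rewrite /gm_weakly_flat /gm_limsupF; apply: eq0_small.
      apply: le_ereal_inf_tmp => _ [f Ff <-]; have [x fx] := Fne f Ff.
      apply: le_ereal_sup_tmp; exists (gm_Mminus A F x); first by exists x.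
      exact: Mm_ge0.
    move=> e e0; have [f Ff hf] := cauchy_small hc e0.
    apply: ge_ereal_inf; exists (ereal_sup (gm_Mminus A F @` f)); first by exists f.
    apply: ge_ereal_sup => _ [x fx <-]; exact: (Mm_le hF Ff fx (fun y fy => hf x y fx fy)).
  + by move=> f Ff; rewrite -GF in Ff; have [e e0 h] := Ff; exists e.
Qed.

End S.

Theorem mainTheorem17 (R : realType) (T : Type) (A : T -> T -> \bar R)
  (hA : gm_gmetric A) (hsym : forall x y, A x y = A y x) :
  (* (1) *)
  (forall F, gm_is_filter F -> gm_flat A F -> gm_cauchy A F) /\
  (* (2) *)
  (forall F, gm_is_filter F -> gm_cauchy A F ->
     (fun x => gm_limsupF F (fun y => A x y)) = (fun x => gm_limsupF F (fun y => A y x))) /\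
  (* (3) *)
  (forall M N, gm_left_module A M -> gm_right_module A N -> gm_adjoint_pair A M N ->
     M = N) /\
  (* (4) *)
  (forall M, gm_left_module A M -> gm_P2_flat A M -> gm_left_adjoint A M) /\
  (* (5) *)
  (forall F, gm_is_filter F -> gm_cauchy A F ->
     (gm_closed_filter A F <-> gm_minimal_cauchy A F)) /\
  (* (6) *)
  (forall F G, gm_is_filter F -> gm_flat A F -> gm_closed_filter A F ->
     gm_is_filter G -> gm_flat A G -> gm_closed_filter A G ->
     G `<=` F -> G = F).
Proof.
split; first exact: flat_cauchy.
split.
  move=> F _ _; apply: funext => x; congr gm_limsupF; apply: funext => y.
  exact: hsym.
split; first exact: adj_eq.
split; first exact: P2_adj.
split; first exact: closed_iff.
move=> F G hF flF clF hG flG _ GF.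
have hcF := flat_cauchy hA hsym hF flF.
have [_ [_ hmin]] := (closed_iff hA hsym hF hcF).1 clF.
exact: hmin G hG (flat_cauchy hA hsym hG flG) GF.
Qed.
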